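(* Let $G$ be a polycyclic-by-finite group and let $S=\bigoplus_{g\in G}S_g$ be an epsilon-strongly $G$-graded ring with principal component $R=S_e$. If $R$ is right (respectively left) noetherian, then $S$ is right (respectively left) noetherian.
   Context: All rings are associative with multiplicative identity $1\neq 0$. A ring $S$ is $G$-graded if $S=\bigoplus_{g\in G}S_g$ for additive subgroups $S_g$ with $S_gS_h\subseteq S_{gh}$ for all $g,h\in G$; $S_e$ is the principal component. $S$ is epsilon-strongly $G$-graded if (a) $S_gS_{g^{-1}}S_g=S_g$ for all $g\in G$, and (b) for each $g\in G$ the ideal $S_gS_{g^{-1}}$ of $S_e$ has a multiplicative identity. A group is polycyclic-by-finite if it has a subnormal series $1=G_0\lhd G_1\lhd\cdots\lhd G_n\lhd G_{n+1}=G$ with $G/G_n$ finite and each $G_{i+1}/G_i$ ($0\le i\le n-1$) cyclic. *)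

(* Defs.v *)
From mathcomp Require Import all_boot all_algebra.
Set Implicit Arguments. Unset Strict Implicit. Unset Printing Implicit Defensive.
Import GRing.Theory.
Local Open Scope ring_scope.

Record group := Group {
  gcar :> Type;
  gmul : gcar -> gcar -> gcar;
  ginv : gcar -> gcar;
  gone : gcar;
  gmulA : forall x y z, gmul x (gmul y z) = gmul (gmul x y) z;
  gmul1 : forall x, gmul gone x = x;
  gmulV : forall x, gmul (ginv x) x = gone
}.

Fixpoint gpow (G : group) (x : G) (n : nat) : G :=
  if n is n'.+1 then gmul x (gpow x n') else gone G.

Definition gzpow (G : group) (x : G) (k : int) : G :=
  match k with
  | Posz n => gpow x n
  | Negz n => ginv (gpow x n.+1)
  end.

Definition is_subgroup (G : group) (H : G -> Prop) : Prop :=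
  H (gone G) /\ (forall x y, H x -> H y -> H (gmul x (ginv y))).

(* G is polycyclic-by-finite: there is a subnormal series
   1 = H 0 <| H 1 <| ... <| H n <| H (n+1) = G with G / H n finite and
   each H (i+1) / H i (0 <= i <= n-1) cyclic. *)
Definition polycyclic_by_finite (G : group) : Prop :=
  exists (n : nat) (H : nat -> G -> Prop),
    (forall i, is_subgroup (H i)) /\
    (forall x, H 0%N x <-> x = gone G) /\
    (forall x, H n.+1 x) /\
    (forall i, (i <= n)%N ->
       (forall x, H i x -> H i.+1 x) /\
       (forall x y, H i x -> H i.+1 y -> H i (gmul (gmul y x) (ginv y)))) /\
    (forall i, (i < n)%N ->
       exists a, H i.+1 a /\
         forall y, H i.+1 y -> exists k : int, H i (gmul (ginv (gzpow a k)) y)) /\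
    (exists (m : nat) (t : 'I_m -> G),
       forall y : G, exists j, H n (gmul (ginv (t j)) y)).

Definition is_addsubgroup (S : nzRingType) (A : S -> Prop) : Prop :=
  A 0 /\ (forall x y, A x -> A y -> A (x - y)).

Definition G_graded (G : group) (S : nzRingType) (Sg : G -> S -> Prop) : Prop :=
  (forall g, is_addsubgroup (Sg g)) /\
  (forall s : S, exists (n : nat) (g : 'I_n -> G) (x : 'I_n -> S),
      (forall i, Sg (g i) (x i)) /\ s = \sum_(i < n) x i) /\
  (forall (n : nat) (g : 'I_n -> G) (x : 'I_n -> S),
      injective g -> (forall i, Sg (g i) (x i)) -> \sum_(i < n) x i = 0 ->
      forall i, x i = 0) /\
  (forall g h x y, Sg g x -> Sg h y -> Sg (gmul g h) (x * y)).

Definition prod3 (S : nzRingType) (A B C : S -> Prop) (s : S) : Prop :=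
  exists (n : nat) (a b c : 'I_n -> S),
    (forall i, A (a i) /\ B (b i) /\ C (c i)) /\ s = \sum_(i < n) (a i * b i * c i).

Definition prod2 (S : nzRingType) (A B : S -> Prop) (s : S) : Prop :=
  exists (n : nat) (a b : 'I_n -> S),
    (forall i, A (a i) /\ B (b i)) /\ s = \sum_(i < n) (a i * b i).

Definition epsilon_strongly_graded (G : group) (S : nzRingType)
    (Sg : G -> S -> Prop) : Prop :=
  G_graded Sg /\
  (forall g : G, forall s, prod3 (Sg g) (Sg (ginv g)) (Sg g) s <-> Sg g s) /\
  (forall g : G, exists e, prod2 (Sg g) (Sg (ginv g)) e /\
     forall y, prod2 (Sg g) (Sg (ginv g)) y -> e * y = y /\ y * e = y).

(* right / left ideals of the subring P of S (P = S_e or P = all of S) *)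
Definition right_ideal_of (S : nzRingType) (P I : S -> Prop) : Prop :=
  (forall x, I x -> P x) /\ I 0 /\ (forall x y, I x -> I y -> I (x - y)) /\
  (forall x r, I x -> P r -> I (x * r)).

Definition left_ideal_of (S : nzRingType) (P I : S -> Prop) : Prop :=
  (forall x, I x -> P x) /\ I 0 /\ (forall x y, I x -> I y -> I (x - y)) /\
  (forall x r, I x -> P r -> I (r * x)).

Definition right_noetherian_on (S : nzRingType) (P : S -> Prop) : Prop :=
  forall I : nat -> S -> Prop,
    (forall k, right_ideal_of P (I k)) ->
    (forall k x, I k x -> I k.+1 x) ->
    exists N, forall k, (N <= k)%N -> forall x, I k x <-> I N x.

Definition left_noetherian_on (S : nzRingType) (P : S -> Prop) : Prop :=
  forall I : nat -> S -> Prop,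
    (forall k, left_ideal_of P (I k)) ->
    (forall k x, I k x -> I k.+1 x) ->
    exists N, forall k, (N <= k)%N -> forall x, I k x <-> I N x.

(* Main.v *)
Require Import Defs.
From mathcomp Require Import all_boot all_order all_algebra.
From mathcomp Require Import zify.
From Stdlib Require Import Classical ClassicalEpsilon.
From Stdlib Require List.
Set Implicit Arguments. Unset Strict Implicit. Unset Printing Implicit Defensive.
Import Order.TTheory GRing.Theory Num.Theory.
Local Open Scope ring_scope.

Inductive span (S : nzRingType) (P : S -> Prop) : S -> Prop :=
| span0 : span P 0
| spanG x : P x -> span P x
| spanB x y : span P x -> span P y -> span P (x - y).

Section Span.
Variable S : nzRingType.
Implicit Types P Q : S -> Prop.

Lemma spanN P x : span P x -> span P (- x).
Proof. by move=> h; rewrite -sub0r; apply: spanB => //; apply: span0. Qed.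

Lemma spanD P x y : span P x -> span P y -> span P (x + y).
Proof. by move=> hx hy; rewrite -[y]opprK; apply: spanB => //; apply: spanN. Qed.

Lemma span_mono P Q x : (forall y, P y -> Q y) -> span P x -> span Q x.
Proof.
move=> hPQ; elim=> [|y Py|y z _ hy _ hz]; first exact: span0.
- by apply: spanG; apply: hPQ.
- exact: spanB.
Qed.

Lemma span_closed P Q x : Q 0 -> (forall y z, Q y -> Q z -> Q (y - z)) ->
  (forall y, P y -> Q y) -> span P x -> Q x.
Proof.
move=> Q0 QB hPQ; elim=> [|y Py|y z _ hy _ hz] //; first exact: hPQ.
exact: QB.
Qed.

Lemma span_idem P x : span (span P) x -> span P x.
Proof. apply: span_closed => //; [exact: span0 | exact: spanB]. Qed.

Lemma span_lin P Q (f : S -> S) x :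
  f 0 = 0 -> (forall y z, f (y - z) = f y - f z) ->
  (forall y, P y -> span Q (f y)) -> span P x -> span Q (f x).
Proof.
move=> f0 fB hPQ; elim=> [|y Py|y z _ hy _ hz]; first by rewrite f0; apply: span0.
- exact: hPQ.
- by rewrite fB; apply: spanB.
Qed.

Lemma span_mulr P Q x r : (forall y, P y -> span Q (y * r)) ->
  span P x -> span Q (x * r).
Proof. by move=> h; apply: (@span_lin P Q (fun y => y * r)) => //;
  [rewrite mul0r | move=> y z; rewrite mulrBl]. Qed.

Lemma span_mull P Q x r : (forall y, P y -> span Q (r * y)) ->
  span P x -> span Q (r * x).
Proof. by move=> h; apply: (@span_lin P Q (fun y => r * y)) => //;
  [rewrite mulr0 | move=> y z; rewrite mulrBr]. Qed.

Lemma span_mul2 P Q R x y : (forall a b, P a -> Q b -> R (a * b)) ->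
  span P x -> span Q y -> span R (x * y).
Proof.
move=> h hx hy; apply: (span_mulr (P := P)) hx => a Pa.
apply: (span_mull (P := Q)) hy => b Qb; apply: spanG; exact: h.
Qed.

Lemma span_sum P n (x : 'I_n -> S) : (forall i, P (x i)) -> span P (\sum_(i < n) x i).
Proof.
elim: n x => [|n IH] x hx; first by rewrite big_ord0; apply: span0.
rewrite big_ord_recl; apply: spanD; first by apply: spanG.
by apply: IH => i.
Qed.

Lemma span_ext P Q x : (forall y, P y <-> Q y) -> span P x <-> span Q x.
Proof. by move=> h; split; apply: span_mono => y /h. Qed.

End Span.

Section Grp.
Variable G : group.
Implicit Types x y z : G.

Lemma mulgV' x : gmul x (ginv x) = gone G.
Proof.
have zz : gmul (gmul x (ginv x)) (gmul x (ginv x)) = gmul x (ginv x).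
  by rewrite -gmulA (gmulA (ginv x)) gmulV gmul1.
by rewrite -[LHS]gmul1 -(gmulV (gmul x (ginv x))) -gmulA zz.
Qed.

Lemma mulg1' x : gmul x (gone G) = x.
Proof. by rewrite -(gmulV x) gmulA mulgV' gmul1. Qed.

Lemma mulKg x y : gmul (ginv x) (gmul x y) = y.
Proof. by rewrite gmulA gmulV gmul1. Qed.

Lemma mulKVg x y : gmul x (gmul (ginv x) y) = y.
Proof. by rewrite gmulA mulgV' gmul1. Qed.

Lemma linv_uniq x y : gmul y x = gone G -> y = ginv x.
Proof. by move=> h; rewrite -[y]mulg1' -(mulgV' x) gmulA h gmul1. Qed.

Lemma ginvK x : ginv (ginv x) = x.
Proof. by apply/esym/linv_uniq; rewrite mulgV'. Qed.

Lemma ginv1 : ginv (gone G) = gone G.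
Proof. by rewrite -[LHS]mulg1' gmulV. Qed.

Lemma ginvM x y : ginv (gmul x y) = gmul (ginv y) (ginv x).
Proof. by apply/esym/linv_uniq; rewrite -gmulA (gmulA (ginv x)) gmulV gmul1 gmulV. Qed.

Lemma gpowS' x n : gpow x n.+1 = gmul (gpow x n) x.
Proof.
elim: n => [|n IH]; first by rewrite /= gmul1 mulg1'.
by change (gmul x (gpow x n.+1) = gmul (gpow x n.+1) x); rewrite [in LHS]IH gmulA; reflexivity.
Qed.

Lemma gzpowS (a : G) (m : int) : gzpow a (m + 1) = gmul (gzpow a m) a.
Proof.
case: m => [n|n].
  have -> : (Posz n + 1 = Posz n.+1)%R by lia.
  by rewrite /= -gpowS'.
case: n => [|n].
  have -> : (Negz 0 + 1 = Posz 0)%R by lia.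
  by rewrite /= mulg1' gmulV.
have -> : (Negz n.+1 + 1 = Negz n)%R by lia.
by rewrite /= [in RHS](ginvM a) -gmulA gmulV mulg1'.
Qed.

Lemma gzpowP (a : G) (m : int) : gzpow a (m - 1) = gmul (gzpow a m) (ginv a).
Proof.
case: m => [[|n]|n].
- have -> : (Posz 0 - 1 = Negz 0)%R by lia.
  by rewrite /= gmul1 mulg1'.
- have -> : (Posz n.+1 - 1 = Posz n)%R by lia.
  by change (gpow a n = gmul (gpow a n.+1) (ginv a)); rewrite gpowS' -gmulA mulgV' mulg1'.
- have -> : (Negz n - 1 = Negz n.+1)%R by lia.
  by rewrite /= (ginvM a).
Qed.

Lemma gzpowD (a : G) (m k : int) : gzpow a (m + k) = gmul (gzpow a m) (gzpow a k).
Proof.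
case: k => n.
  elim: n m => [|n IH] m.
    by rewrite addr0 /= mulg1'.
  have -> : (m + Posz n.+1 = (m + Posz n) + 1)%R by lia.
  rewrite gzpowS IH -gmulA; congr gmul.
  by rewrite -gzpowS; congr gzpow; lia.
elim: n m => [|n IH] m.
  have -> : (m + Negz 0 = m - 1)%R by lia.
  by rewrite gzpowP /= mulg1'.
have -> : (m + Negz n.+1 = (m + Negz n) - 1)%R by lia.
rewrite gzpowP IH -gmulA; congr gmul.
by rewrite -gzpowP; congr gzpow; lia.
Qed.

Lemma gzpow0 (a : G) : gzpow a 0 = gone G.
Proof. by []. Qed.

Lemma gzpowN (a : G) (m : int) : gzpow a (- m) = ginv (gzpow a m).
Proof.
apply: linv_uniq; rewrite -gzpowD.
by have -> : (- m + m = 0)%R by lia.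
Qed.

Variable H : G -> Prop.
Hypothesis sH : is_subgroup H.

Lemma sg1 : H (gone G). Proof. by case: sH. Qed.
Lemma sgV x : H x -> H (ginv x).
Proof. by case: sH => h1 hB hx; rewrite -[ginv x]gmul1; apply: hB. Qed.
Lemma sgM x y : H x -> H y -> H (gmul x y).
Proof. by case: sH => h1 hB hx hy; rewrite -[y]ginvK; apply: hB => //; apply: sgV. Qed.
Lemma sg_pow (a : G) n : H a -> H (gpow a n).
Proof. by move=> ha; elim: n => [|n IH] /=; [apply: sg1 | apply: sgM]. Qed.
Lemma sg_zpow (a : G) k : H a -> H (gzpow a k).
Proof. by move=> ha; case: k => n; [exact: sg_pow | apply: sgV; exact: sg_pow]. Qed.
End Grp.

Lemma subDD (S : zmodType) (a b c d : S) : (a + b) - (c + d) = (a - c) + (b - d).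
Proof. by rewrite opprD addrACA. Qed.
Lemma subDl2 (S : zmodType) (a m m' : S) : (a + m) - (a + m') = m - m'.
Proof. by rewrite subDD subrr add0r. Qed.
Lemma addE_sub (S : zmodType) (x y : S) : x + y = x - (0 - y).
Proof. by rewrite sub0r opprK. Qed.
Lemma addsubK2 (S : zmodType) (a m m' : S) : (a + m') + (m - m') = a + m.
Proof. by rewrite -addrA (addrC m') subrK. Qed.

Lemma chain_mono (S : nzRingType) (I : nat -> S -> Prop) :
  (forall k x, I k x -> I k.+1 x) -> forall k k' x, (k <= k')%N -> I k x -> I k' x.
Proof.
move=> hI k k' x /subnKC <-; elim: (k' - k)%N => [|d IH]; first by rewrite addn0.
by move=> hx; rewrite addnS; apply: hI; apply: IH.
Qed.

Lemma stab_later (S : nzRingType) (I : nat -> S -> Prop) N M :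
  (forall k, (N <= k)%N -> forall x, I k x <-> I N x) -> (N <= M)%N ->
  forall k, (M <= k)%N -> forall x, I k x <-> I M x.
Proof.
move=> hN hNM k hk x; rewrite hN; last exact: leq_trans hk.
by rewrite hN.
Qed.

Section FG.
Variable S : nzRingType.
Variable P : S -> Prop.
Hypotheses (P0 : P 0) (PB : forall x y, P x -> P y -> P (x - y))
  (PM : forall x y, P x -> P y -> P (x * y)) (RNP : right_noetherian_on P).

Definition rspan (A : Type) (phi : A -> S) (xs : seq A) : S -> Prop :=
  span (fun y => exists p, List.In p xs /\ (y = phi p \/ exists r, P r /\ y = phi p * r)).

Lemma rspan_ideal A (phi : A -> S) xs : (forall p, List.In p xs -> P (phi p)) ->
  right_ideal_of P (rspan phi xs).
Proof.
move=> hP; split; last split; last split.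
- move=> x; rewrite /rspan; apply: span_closed => // y [p [hp [->|[r [Pr ->]]]]]; first exact: hP.
  by apply: PM => //; apply: hP.
- exact: span0.
- by move=> x y; apply: spanB.
- move=> x r hx Pr; apply: (span_mulr (P := fun y => exists p, List.In p xs /\ (y = phi p \/ exists r, P r /\ y = phi p * r))) hx.
  move=> y [p [hp [->|[r' [Pr' ->]]]]]; apply: spanG; exists p; split=> //; right.
    by exists r.
  by exists (r' * r); split; [apply: PM | rewrite mulrA].
Qed.

Lemma fg A (a0 : A) (X : A -> Prop) (phi : A -> S) :
  (forall z, X z -> P (phi z)) ->
  exists xs, (forall p, List.In p xs -> X p) /\ forall z, X z -> rspan phi xs (phi z).
Proof.
move=> hXP; apply: NNPP => hn.
have H xs : exists z, (forall p, List.In p xs -> X p) -> X z /\ ~ rspan phi xs (phi z).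
  case: (classic (forall p, List.In p xs -> X p)) => hall; last by exists a0.
  apply: NNPP => hz; apply: hn; exists xs; split=> // z Xz.
  apply: NNPP => hr; apply: hz; exists z => _; done.
pose next xs := proj1_sig (constructive_indefinite_description _ (H xs)).
have hnext xs : (forall p, List.In p xs -> X p) -> X (next xs) /\ ~ rspan phi xs (phi (next xs)).
  exact: (proj2_sig (constructive_indefinite_description _ (H xs))).
pose chain k := iter k (fun xs => next xs :: xs) [::].
have hall k : forall p, List.In p (chain k) -> X p.
  elim: k => [|k IH] p //= [<-|hp]; last exact: IH.
  by case: (hnext _ IH).
have hmono : forall k x, rspan phi (chain k) x -> rspan phi (chain k.+1) x.
  move=> k x; apply: span_mono => y [p [hp hy]]; exists p; split=> //.
  by right.
have [N hN] := RNP (I := fun k => rspan phi (chain k))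
  (fun k => rspan_ideal (fun p hp => hXP p (hall k p hp))) hmono.
have hm : rspan phi (chain N.+1) (phi (next (chain N))).
  by apply: spanG; exists (next (chain N)); split; [left | left].
move/(hN N.+1 (leqnSn N)): hm.
by case: (hnext _ (hall N)).
Qed.
End FG.

Section ML.
Variable S : nzRingType.
Variable T : S -> Prop.
Hypotheses (T0 : T 0) (TB : forall x y, T x -> T y -> T (x - y))
  (TM : forall x y, T x -> T y -> T (x * y)) (RNT : right_noetherian_on T).

Definition Mspan (gens : seq S) :=
  span (fun y => exists a t, List.In a gens /\ T t /\ y = a * t).

Lemma TD x y : T x -> T y -> T (x + y).
Proof. move=> hx hy; have -> : x + y = x - (0 - y) by rewrite sub0r opprK.
by apply: TB => //; apply: TB. Qed.

Lemma Mspan_mulr gens x r : T r -> Mspan gens x -> Mspan gens (x * r).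
Proof.
move=> Tr; apply: span_mulr => y [a [t [ha [Tt ->]]]]; apply: spanG.
by exists a, (t * r); split=> //; split; [apply: TM | rewrite mulrA].
Qed.

Lemma Mspan_cons b gs x : Mspan (b :: gs) x ->
  exists t m, T t /\ Mspan gs m /\ x = b * t + m.
Proof.
apply: (@span_closed _ _ (fun x => exists t m, T t /\ Mspan gs m /\ x = b * t + m)).
- by exists 0, 0; split=> //; split; [apply: span0 | rewrite mulr0 addr0].
- move=> y z [t1 [m1 [T1 [M1 ->]]]] [t2 [m2 [T2 [M2 ->]]]].
  exists (t1 - t2), (m1 - m2); split; first exact: TB.
  by split; [apply: spanB | rewrite mulrBr subDD].
- move=> y [a [t [[<-|ha] [Tt ->]]]].
    by exists t, 0; split=> //; split; [apply: span0 | rewrite addr0].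
  exists 0, (a * t); split=> //; split; last by rewrite mulr0 add0r.
  by apply: spanG; exists a, t.
Qed.

Lemma Mspan_sub b gs x : Mspan gs x -> Mspan (b :: gs) x.
Proof. apply: span_mono => y [a [t [ha hy]]]; exists a, t; split=> //; by right. Qed.

Lemma ML gens : forall Nc : nat -> S -> Prop,
  (forall k, Nc k 0 /\ (forall x y, Nc k x -> Nc k y -> Nc k (x - y)) /\
     (forall x r, Nc k x -> T r -> Nc k (x * r)) /\ (forall x, Nc k x -> Mspan gens x)) ->
  (forall k x, Nc k x -> Nc k.+1 x) ->
  exists N, forall k, (N <= k)%N -> forall x, Nc k x <-> Nc N x.
Proof.
elim: gens => [|b gs IH] Nc hNc hmono.
  have z0 k x : Nc k x -> x = 0.
    move=> hx; have := (hNc k).2.2.2 x hx.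
    by apply: (@span_closed _ _ (fun x => x = 0)) => // [y z -> ->|y [a [t [[] _]]]]; rewrite subr0.
  exists 0%N => k _ x; split=> hx.
    by rewrite (z0 _ _ hx); case: (hNc 0%N).
  by rewrite (z0 _ _ hx); case: (hNc k).
pose I k t := T t /\ exists m, Mspan gs m /\ Nc k (b * t + m).
have hI : forall k, right_ideal_of T (I k).
  move=> k; have [N0 [NB [NM Nsp]]] := hNc k.
  split; first by move=> x [].
  split; first by split=> //; exists 0; split; [apply: span0 | rewrite mulr0 addr0].
  split.
    move=> x y [Tx [m1 [M1 N1]]] [Ty [m2 [M2 N2]]]; split; first exact: TB.
    exists (m1 - m2); split; first exact: spanB.
    by have := NB _ _ N1 N2; congr (Nc k); rewrite mulrBr subDD.
  move=> x r [Tx [m [Mm Nm]]] Tr; split; first exact: TM.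
  exists (m * r); split; first exact: Mspan_mulr.
  by have := NM _ _ Nm Tr; congr (Nc k); rewrite mulrDl mulrA.
have hImono : forall k x, I k x -> I k.+1 x.
  by move=> k x [Tx [m [Mm Nm]]]; split=> //; exists m; split=> //; apply: hmono.
have [N1 hN1] := RNT hI hImono.
pose Nc' k x := Nc k x /\ Mspan gs x.
have [N2 hN2] : exists N, forall k, (N <= k)%N -> forall x, Nc' k x <-> Nc' N x.
  apply: IH.
    move=> k; have [N0 [NB [NM Nsp]]] := hNc k.
    split; first by split=> //; apply: span0.
    split; first by move=> x y [] ? ? [] ? ?; split; [apply: NB | apply: spanB].
    split; first by move=> x r [] ? ? ?; split; [apply: NM | apply: Mspan_mulr].
    by move=> x [].
  by move=> k x [] ? ?; split=> //; apply: hmono.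
exists (maxn N1 N2) => k hk x; split; last first.
  by apply: chain_mono.
move=> hx.
have hsp := (hNc k).2.2.2 x hx.
have [t [m [Tt [Mm hxe]]]] := Mspan_cons hsp.
rewrite hxe in hx *.
have hIk : I k t by split=> //; exists m; split.
have := (stab_later hN1 (leq_maxl N1 N2) hk t).1 hIk.
move=> [_ [m' [Mm' Nm']]].
have hNk : Nc k (b * t + m') by apply: (chain_mono hmono hk).
have [_ [NBk _]] := hNc k.
have [N0N [NBN _]] := hNc (maxn N1 N2).
have hd : Nc' k (m - m').
  split; last exact: spanB.
  by have := NBk _ _ hx hNk; congr (Nc k); rewrite subDl2.
have [hd1 _] := (stab_later hN2 (leq_maxr N1 N2) hk (m - m')).1 hd.
have := NBN _ _ Nm' (NBN _ _ N0N hd1).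
by congr (Nc _); rewrite -addE_sub addsubK2.
Qed.

End ML.

Section Z.
Variable S : nzRingType.
Variables (T Uall : S -> Prop) (U : int -> S -> Prop).
Hypotheses (U0 : forall m, U m 0)
  (UB : forall m x y, U m x -> U m y -> U m (x - y))
  (UM : forall m k x y, U m x -> U k y -> U (m + k) (x * y))
  (U0T : forall x, U 0 x <-> T x)
  (UUall : forall m x, U m x -> Uall x)
  (Ucov : forall x, Uall x -> span (fun y => exists m, U m y) x)
  (UCU : forall n, exists f, span (fun y => exists b c, U (- n) b /\ U n c /\ y = b * c) f
                  /\ forall s, U n s -> s * f = s)
  (RNT : right_noetherian_on T).

Fixpoint Rep (n : int) (l : nat) (x : S) : Prop :=
  if l is l'.+1 then exists t y, U n t /\ Rep (n - 1) l' y /\ x = t + y else x = 0.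

Lemma Rep0 n l : Rep n l 0.
Proof.
elim: l n => [|l IH] n //=; exists 0, 0; split=> //; split=> //.
by rewrite addr0.
Qed.

Lemma RepB n l x y : Rep n l x -> Rep n l y -> Rep n l (x - y).
Proof.
elim: l n x y => [|l IH] n x y /=; first by move=> -> ->; rewrite subr0.
move=> [t1 [y1 [h1 [r1 ->]]]] [t2 [y2 [h2 [r2 ->]]]].
exists (t1 - t2), (y1 - y2); split; first exact: UB.
by split; [apply: IH | rewrite subDD].
Qed.

Lemma RepD n l x y : Rep n l x -> Rep n l y -> Rep n l (x + y).
Proof. by move=> hx hy; rewrite addE_sub; apply: RepB => //; apply: RepB => //; apply: Rep0. Qed.

Lemma Rep_pad n l x : Rep n l x -> Rep n l.+1 x.
Proof.
elim: l n x => [|l IH] n x /=.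
  by move=> ->; exists 0, 0; split=> //; split=> //; rewrite addr0.
move=> [t [y [ht [hy ->]]]]; exists t, y; split=> //; split=> //.
exact: IH.
Qed.

Lemma Rep_up n l x : Rep n l x -> Rep (n + 1) l.+1 x.
Proof.
move=> h /=; exists 0, x; split=> //; split; last by rewrite add0r.
by rewrite addrK.
Qed.

Lemma Rep_upd n l x d : Rep n l x -> Rep (n + d%:Z) (l + d) x.
Proof.
move=> h; elim: d => [|d IH]; first by rewrite addr0 addn0.
have -> : (n + d.+1%:Z = (n + d%:Z) + 1)%R by lia.
by rewrite addnS; apply: Rep_up.
Qed.

Lemma Rep_padd n l x d : Rep n l x -> Rep n (l + d) x.
Proof.
move=> h; elim: d => [|d IH]; first by rewrite addn0.
by rewrite addnS; apply: Rep_pad.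
Qed.

Lemma Rep_join n l x n' l' x' : Rep n l x -> Rep n' l' x' ->
  exists N L, Rep N L x /\ Rep N L x'.
Proof.
move=> h h'; case: (lerP n n') => hn.
  have [d hd] : exists d : nat, n' = n + d%:Z.
    by exists `|n' - n|%N; lia.
  exists n', (l + d + l')%N; split.
    by rewrite hd; apply: Rep_padd; apply: Rep_upd.
  by rewrite addnC; apply: Rep_padd.
have [d hd] : exists d : nat, n = n' + d%:Z.
  by exists `|n - n'|%N; lia.
exists n, (l' + d + l)%N; split.
  by rewrite addnC; apply: Rep_padd.
by rewrite hd; apply: Rep_padd; apply: Rep_upd.
Qed.

Lemma Rep_mul n l x k u : Rep n l x -> U k u -> Rep (n + k) l (x * u).
Proof.
elim: l n x => [|l IH] n x /=; first by move=> -> _; rewrite mul0r.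
move=> [t [y [ht [hy ->]]]] hu; exists (t * u), (y * u); split; first exact: UM.
split; last by rewrite mulrDl.
by rewrite addrAC; apply: IH.
Qed.

Lemma Rep_cov x : Uall x -> exists n l, Rep n l x.
Proof.
move=> /Ucov; apply: (@span_closed _ _ (fun x => exists n l, Rep n l x)).
- by exists 0, 0%N.
- move=> y z [n [l hy]] [n' [l' hz]].
  have [N [L [h1 h2]]] := Rep_join hy hz.
  by exists N, L; apply: RepB.
- move=> y [m hm]; exists m, 1%N => /=; exists y, 0; split=> //.
  by split=> //; rewrite addr0.
Qed.

Definition L (J : S -> Prop) (l : nat) (n : int) (t : S) :=
  U n t /\ exists x y, J x /\ Rep (n - 1) l y /\ x = t + y.

Section Ideal.
Variable J : S -> Prop.
Hypothesis hJ : right_ideal_of Uall J.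

Lemma J0 : J 0. Proof. by case: hJ => _ []. Qed.
Lemma JB x y : J x -> J y -> J (x - y). Proof. by case: hJ => _ [_ [hB _]]; apply: hB. Qed.
Lemma JD x y : J x -> J y -> J (x + y).
Proof. by move=> hx hy; rewrite addE_sub; apply: JB => //; apply: JB => //; apply: J0. Qed.
Lemma JM x r : J x -> Uall r -> J (x * r). Proof. by case: hJ => _ [_ [_ hM]]; apply: hM. Qed.

Lemma L0 l n : L J l n 0.
Proof.
split; first exact: U0.
exists 0, 0; split; first exact: J0.
by split; [apply: Rep0 | rewrite addr0].
Qed.

Lemma LB l n t1 t2 : L J l n t1 -> L J l n t2 -> L J l n (t1 - t2).
Proof.
move=> [h1 [x1 [y1 [J1 [R1 e1]]]]] [h2 [x2 [y2 [J2 [R2 e2]]]]].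
split; first exact: UB.
exists (x1 - x2), (y1 - y2); split; first exact: JB.
by split; [apply: RepB | rewrite e1 e2 subDD].
Qed.

Lemma LM l n k t u : L J l n t -> U k u -> L J l (n + k) (t * u).
Proof.
move=> [ht [x [y [Jx [Ry e]]]]] hu; split; first exact: UM.
exists (x * u), (y * u); split; first by apply: JM => //; apply: UUall hu.
split; last by rewrite e mulrDl.
by rewrite addrAC; apply: Rep_mul.
Qed.

Lemma L_ideal l : right_ideal_of T (L J l 0).
Proof.
split; first by move=> x [/U0T].
split; first exact: L0.
split; first by move=> x y; apply: LB.
by move=> x r hx /U0T hr; have := LM hx hr; rewrite addr0.
Qed.

Lemma Lspan l n t : L J l n t ->
  span (fun y => exists l0 u, L J l 0 l0 /\ U n u /\ y = l0 * u) t.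
Proof.
move=> hL; have [f [hf hsf]] := UCU n.
rewrite -(hsf t (proj1 hL)).
apply: (span_mull (P := fun y => exists b c, U (- n) b /\ U n c /\ y = b * c)) hf.
move=> y [b [c [hb [hc ->]]]]; apply: spanG; exists (t * b), c; split.
  by have := LM hL hb; rewrite addrN.
by split=> //; rewrite mulrA.
Qed.
End Ideal.

Lemma Lpad J l n t : L J l n t -> L J l.+1 n t.
Proof.
move=> [h [x [y [Jx [Ry e]]]]]; split=> //; exists x, y; split=> //.
by split=> //; apply: Rep_pad.
Qed.

Lemma Lpadn J l l' n t : (l <= l')%N -> L J l n t -> L J l' n t.
Proof.
move=> hl; apply: (@chain_mono S (fun l => L J l n) _ l l' t hl).
by move=> k x; apply: Lpad.
Qed.

Lemma Lmono (J J' : S -> Prop) l n t : (forall x, J x -> J' x) -> L J l n t -> L J' l n t.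
Proof.
move=> hJJ [h [x [y [Jx [Ry e]]]]]; split=> //; exists x, y.
by split; [apply: hJJ | split].
Qed.

Lemma Lext J J' l n t : right_ideal_of Uall J -> right_ideal_of Uall J' ->
  (forall t, L J l 0 t -> L J' l 0 t) -> L J l n t -> L J' l n t.
Proof.
move=> hJ hJ' h0 hL; have := Lspan hJ hL.
apply: span_closed; [exact: L0 | move=> y z; exact: LB |].
move=> y [l0 [u [hl0 [hu ->]]]].
by have := LM hJ' (h0 _ hl0) hu; rewrite add0r.
Qed.

Theorem zstep : right_noetherian_on Uall.
Proof.
move=> J hJ hmono.
pose A l k := L (J k) l 0.
have hJk k k' x : (k <= k')%N -> J k x -> J k' x.
  by move=> hk; apply: (chain_mono hmono).
have Amono l l' k k' t : (l <= l')%N -> (k <= k')%N -> A l k t -> A l' k' t.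
  move=> hl hk h; apply: (Lpadn hl); apply: Lmono h => x; exact: hJk.
have [p hp] := RNT (I := fun k => A k k) (fun k => L_ideal (hJ k) k)
  (fun k t => Amono k k.+1 k k.+1 t (leqnSn k) (leqnSn k)).
have hl : forall l, exists N, forall k, (N <= k)%N -> forall t, A l k t <-> A l N t.
  move=> l; apply: RNT; first by move=> k; apply: L_ideal.
  by move=> k t; apply: Amono.
have hq : forall q, exists N, forall l, (l < q)%N -> forall k, (N <= k)%N ->
    forall t, A l k t -> A l N t.
  elim=> [|q [N' hN']]; first by exists 0%N.
  have [Nq hNq] := hl q.
  exists (maxn N' Nq) => l hlq k hk t hA.
  rewrite ltnS leq_eqVlt in hlq; case/orP: hlq => [/eqP hlq|hlq].
    subst l; by rewrite -> (stab_later hNq (leq_maxr N' Nq) hk) in hA.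
  apply: (Amono l l N') => //; first exact: leq_maxl.
  by apply: (hN' l hlq k) => //; exact: leq_trans (leq_maxl _ _) hk.
have [N0 hN0] := hq p.
pose N := maxn p N0.
have hA : forall l k, (N <= k)%N -> forall t, A l k t -> A l N t.
  move=> l k hk t h.
  case: (ltnP l p) => hlp.
    apply: (Amono l l N0) => //; first exact: leq_maxr.
    by apply: (hN0 l hlp k) => //; exact: leq_trans (leq_maxr _ _) hk.
  have h1 : A (maxn l k) (maxn l k) t by apply: (Amono l _ k) h; [apply: leq_maxl | apply: leq_maxr].
  have h2 : (p <= maxn l k)%N by apply: leq_trans hlp (leq_maxl _ _).
  rewrite -> (hp _ h2) in h1.
  by apply: (Amono p _ p) h1 => //; apply: leq_maxl.
have hLn : forall l k, (N <= k)%N -> forall n t, L (J k) l n t -> L (J N) l n t.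
  by move=> l k hk n t; apply: Lext; [apply: hJ | apply: hJ | apply: hA].
have claim : forall l n k x, (N <= k)%N -> J k x -> Rep n l x -> J N x.
  elim=> [|l IH] n k x hk hx /=; first by move=> ->; apply: J0 (hJ N).
  move=> [t [y [ht [hy hxe]]]].
  have hLt : L (J k) l n t by split=> //; exists x, y.
  have [_ [x' [y' [Jx' [Ry' hx'e]]]]] := hLn _ _ hk _ _ hLt.
  have hd : J k (y - y').
    have -> : y - y' = x - x' by rewrite hxe hx'e subDl2.
    by apply: JB (hJ k) _ _ hx _; apply: hJk hk Jx'.
  have := IH _ _ _ hk hd (RepB hy Ry').
  move=> hN; have -> : x = x' + (y - y') by rewrite hxe hx'e addsubK2.
  exact: JD (hJ N) _ _ Jx' hN.
exists N => k hk x; split=> hx; last exact: hJk hk hx.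
have [_ [_ _]] := hJ k.
have [n [l hR]] := Rep_cov ((proj1 (hJ k)) x hx).
exact: claim hk hx hR.
Qed.
End Z.

Lemma RN_ext (S : nzRingType) (P Q : S -> Prop) : (forall x, P x <-> Q x) ->
  right_noetherian_on P -> right_noetherian_on Q.
Proof.
move=> hPQ hP I hI hm; apply: hP => // k.
have [h1 [h2 [h3 h4]]] := hI k.
split; first by move=> x /h1 /hPQ.
by split=> //; split=> // x r hx /hPQ; apply: h4.
Qed.

Lemma inE_In (T : eqType) (x : T) (s : seq T) : x \in s -> List.In x s.
Proof.
elim: s => //= a s IH; rewrite inE => /orP [/eqP ->|/IH]; [left|right] => //.
Qed.

Section Core.
Variables (G : group) (S : nzRingType) (Sg : G -> S -> Prop).
Hypotheses
 (Sg0 : forall g, Sg g 0) (SgB : forall g x y, Sg g x -> Sg g y -> Sg g (x - y))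
 (Scov : forall s, span (fun x => exists g, Sg g x) s)
 (SgM : forall g h x y, Sg g x -> Sg h y -> Sg (gmul g h) (x * y))
 (S3 : forall g s, Sg g s -> span (fun y => exists a b c, Sg g a /\ Sg (ginv g) b /\ Sg g c /\ y = a * b * c) s)
 (S5 : forall g, exists e, span (fun y => exists b c, Sg (ginv g) b /\ Sg g c /\ y = b * c) e /\
          (forall r, Sg (gone G) r -> e * r = r * e) /\ e * e = e /\ forall s, Sg g s -> s * e = s)
 (RNe : right_noetherian_on (Sg (gone G))).

Local Notation E := (Sg (gone G)).

Lemma EM x y : E x -> E y -> E (x * y).
Proof. by move=> hx hy; have := SgM hx hy; rewrite gmul1. Qed.

Lemma span_E (P : S -> Prop) x : (forall y, P y -> E y) -> span P x -> E x.
Proof. by move=> h; apply: span_closed => //; apply: SgB. Qed.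

Fixpoint joinl (es : seq S) : S :=
  if es is e :: es' then joinl es' + e - joinl es' * e else 0.

Lemma CU (C : G -> Prop) : exists f,
  span (fun y => exists g b c, C g /\ Sg (ginv g) b /\ Sg g c /\ y = b * c) f /\
  forall g s, C g -> Sg g s -> s * f = s.
Proof.
pose W := span (fun y => exists g b c, C g /\ Sg (ginv g) b /\ Sg g c /\ y = b * c).
pose X e := exists g, C g /\ span (fun y => exists b c, Sg (ginv g) b /\ Sg g c /\ y = b * c) e /\
          (forall r, E r -> e * r = r * e) /\ e * e = e.
have XW e : X e -> W e.
  move=> [g [Cg [he _]]]; apply: span_mono he => y [b [c [hb [hc ->]]]].
  by exists g, b, c.
have WE y : W y -> E y.
  apply: span_E => z [g [b [c [_ [hb [hc ->]]]]]].
  by have := SgM hb hc; rewrite gmulV.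
have WM y r : E r -> W y -> W (y * r).
  move=> hr; apply: span_mulr => z [g [b [c [Cg [hb [hc ->]]]]]].
  apply: spanG; exists g, b, (c * r); split=> //; split=> //; split; last by rewrite mulrA.
  by have := SgM hc hr; rewrite mulg1'.
have [es [hes hcov]] := fg (Sg0 (gone G)) (@SgB (gone G)) EM RNe 0 (phi := id) (X := X) (fun z hz => WE z (XW z hz)).
have hj : forall es, (forall p, List.In p es -> X p) ->
    W (joinl es) /\ forall e, List.In e es -> joinl es * e = e.
  elim=> [|e es' IH] hX /=; first by split=> //; apply: span0.
  have [Wf hf] := IH (fun p hp => hX p (or_intror hp)).
  have Xe := hX e (or_introl erefl).
  have We := XW _ Xe.
  have [g [Cg [_ [ce ee]]]] := Xe.
  split.
    by apply: spanB; [apply: spanD | apply: WM => //; apply: WE].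
  move=> e' [<-|he'].
    by rewrite mulrBl mulrDl -mulrA ee addrAC subrr add0r.
  have ce' : e * e' = e' * e by apply: ce; apply: WE; apply: XW; apply: hX; right.
  by rewrite mulrBl mulrDl (hf _ he') -mulrA ce' mulrA (hf _ he') addrK.
have [Wf hf] := hj es hes.
exists (joinl es); split=> // g s Cg hs.
have [e [he [ce [ee hse]]]] := S5 g.
have Xe : X e by exists g.
have hfe : joinl es * e = e.
  have := hcov e Xe; rewrite /rspan /=.
  apply: (@span_closed _ _ (fun z => joinl es * z = z)).
  - by rewrite mulr0.
  - by move=> y z hy hz; rewrite mulrBr hy hz.
  - move=> y [p [hp [->|[r [_ ->]]]]]; first exact: hf.
    by rewrite mulrA hf.
by rewrite -(hse s hs) -mulrA ce ?hfe //; apply: WE.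
Qed.

Definition TH (H : G -> Prop) := span (fun x => exists g, H g /\ Sg g x).

Section Fin.
Variables (K : G -> Prop) (sK : is_subgroup K) (m : nat) (t : 'I_m -> G).
Hypothesis cov : forall y, exists j, K (gmul (ginv (t j)) y).

Lemma finstep : right_noetherian_on (TH K) -> right_noetherian_on (fun _ : S => True).
Proof.
move=> RNT.
have T0 : TH K 0 by apply: span0.
have TB x y : TH K x -> TH K y -> TH K (x - y) by apply: spanB.
have TM x y : TH K x -> TH K y -> TH K (x * y).
  apply: span_mul2 => a b [g [Kg ha]] [h [Kh hb]].
  by exists (gmul g h); split; [apply: sgM | apply: SgM].
pose X j (p : S * S) := exists g, K (gmul (ginv (t j)) g) /\ Sg g p.1 /\ Sg (ginv g) p.2.
pose phi (p : S * S) := p.1 * p.2.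
have hxx : forall j, exists xs, (forall p, List.In p xs -> X j p) /\
    forall z, X j z -> rspan E phi xs (phi z).
  move=> j; apply: (fg (Sg0 (gone G)) (@SgB (gone G)) EM RNe (0, 0)).
  by move=> [a b] [g [_ [ha hb]]]; have := SgM ha hb; rewrite /phi /= mulgV'.
pose xs j := proj1_sig (constructive_indefinite_description _ (hxx j)).
have hxs j : (forall p, List.In p (xs j) -> X j p) /\
    forall z, X j z -> rspan E phi (xs j) (phi z).
  exact: (proj2_sig (constructive_indefinite_description _ (hxx j))).
pose gens := List.flat_map (fun j => List.map fst (xs j)) (enum 'I_m).
have Kdiv j g h : K (gmul (ginv (t j)) g) -> K (gmul (ginv (t j)) h) -> K (gmul (ginv g) h).
  move=> hg hh; have := sgM sK (sgV sK hg) hh.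
  by rewrite ginvM ginvK -!gmulA mulKVg.
have inG j p : List.In p (xs j) -> List.In p.1 gens.
  move=> hp; apply/List.in_flat_map; exists j; split; first by apply: inE_In; rewrite mem_enum.
  exact: List.in_map.
have all_M : forall s, Mspan (TH K) gens s.
  move=> s; apply: span_closed (Scov s); [exact: span0 | move=> ? ?; exact: spanB |].
  move=> x [g hg]; have [j hj] := cov g.
  apply: span_closed (S3 hg); [exact: span0 | move=> ? ?; exact: spanB |].
  move=> y [a [b [c [ha [hb [hc ->]]]]]].
  have hab : rspan E phi (xs j) (phi (a, b)) by apply: (hxs j).2; exists g.
  apply: (span_mulr (P := fun y => exists p, List.In p (xs j) /\ (y = phi p \/ exists r, E r /\ y = phi p * r))) hab.
  move=> z [p [hp hz]]; have [gp [hgp [hp1 hp2]]] := (hxs j).1 p hp.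
  have Kp := Kdiv j gp g hgp hj.
  apply: spanG; case: hz => [->|[r [hr ->]]].
    exists p.1, (p.2 * c); split; first exact: inG hp.
    split; last by rewrite /phi mulrA.
    by apply: spanG; exists (gmul (ginv gp) g); split=> //; apply: SgM.
  exists p.1, (p.2 * r * c); split; first exact: inG hp.
  split; last by rewrite /phi !mulrA.
  apply: spanG; exists (gmul (ginv gp) g); split=> //.
  by have := SgM (SgM hp2 hr) hc; rewrite mulg1'.
move=> J hJ hmono; apply: (ML T0 TB TM RNT (gens := gens)) => // k.
have [_ [h0 [hB hM]]] := hJ k.
by split=> //; split=> //; split=> // x r hx _; apply: hM.
Qed.
End Fin.

Section Zi.
Variables (K H' : G -> Prop) (sK : is_subgroup K) (sH' : is_subgroup H').
Hypotheses (KH : forall x, K x -> H' x)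
  (nK : forall x y, K x -> H' y -> K (gmul (gmul y x) (ginv y))).
Variables (a : G) (Ha : H' a).
Hypothesis cyc : forall y, H' y -> exists k : int, K (gmul (ginv (gzpow a k)) y).

Let C (m : int) g := K (gmul (ginv (gzpow a m)) g).

Lemma F1 m k g h : C m g -> C k h -> C (m + k) (gmul g h).
Proof.
move=> hg hh; rewrite /C gzpowD ginvM.
have hw : H' (ginv (gzpow a k)) := sgV sH' (sg_zpow sH' k Ha).
have := sgM sK (nK hg hw) hh.
by rewrite ginvK -!gmulA mulKVg.
Qed.

Lemma F2 m g : C m g -> C (- m) (ginv g).
Proof.
move=> hg; rewrite /C gzpowN ginvK.
have hp : H' (gzpow a m) := sg_zpow sH' m Ha.
have := nK (sgV sK hg) hp.
by rewrite ginvM ginvK -!gmulA mulgV' mulg1'.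
Qed.

Lemma zinst : right_noetherian_on (TH K) -> right_noetherian_on (TH H').
Proof.
move=> RNT.
pose U m := span (fun x => exists g, C m g /\ Sg g x).
apply: (@zstep S (TH K) (TH H') U) => //.
- by move=> m; apply: span0.
- by move=> m x y; apply: spanB.
- move=> m k x y; apply: span_mul2 => p q [g [hg hp]] [h [hh hq]].
  by exists (gmul g h); split; [apply: F1 | apply: SgM].
- move=> x; apply: span_ext => y; split=> [[g [hg hy]]|[g [hg hy]]]; exists g; split=> //.
    by move: hg; rewrite /C /= ginv1 gmul1.
  by rewrite /C /= ginv1 gmul1.
- move=> m x; apply: span_mono => y [g [hg hy]]; exists g; split=> //.
  have := sgM sH' (sg_zpow sH' m Ha) (KH hg).
  by rewrite mulKVg.
- move=> x; apply: span_mono => y [g [hg hy]].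
  have [k hk] := cyc hg; exists k; apply: spanG; exists g; split=> //.
- move=> n; have [f [hf hsf]] := CU (C n); exists f; split.
    apply: span_mono hf => y [g [b [c [hg [hb [hc ->]]]]]]; exists b, c; split.
      by apply: spanG; exists (ginv g); split=> //; apply: F2.
    by split=> //; apply: spanG; exists g.
  move=> s; apply: (@span_closed _ _ (fun s => s * f = s)).
  + by rewrite mul0r.
  + by move=> y z hy hz; rewrite mulrBl hy hz.
  + by move=> y [g [hg hy]]; apply: hsf hg hy.
Qed.
End Zi.

Theorem core : polycyclic_by_finite G -> right_noetherian_on (fun _ : S => True).
Proof.
move=> [n [H [sH [H0 [Hall [Hnorm [Hcyc [m [t ht]]]]]]]]].
have step : forall i, (i <= n)%N -> right_noetherian_on (TH (H i)).
  elim=> [|i IH] hi.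
    apply: RN_ext RNe => x; split.
      by move=> hx; apply: spanG; exists (gone G); split=> //; apply/H0.
    apply: span_closed; [exact: Sg0 | exact: SgB |].
    by move=> y [g [/H0 -> hy]].
  have [a [Ha hcov]] := Hcyc i hi.
  have [h1 h2] := Hnorm i (ltnW hi).
  exact: (zinst (sH i) (sH i.+1) h1 h2 Ha hcov (IH (ltnW hi))).
exact: (finstep (sH n) ht (step n (leqnn n))).
Qed.
End Core.

Section Final.
Variables (G : group) (S : nzRingType) (Sg : G -> S -> Prop).

Lemma prod2_span (A B : S -> Prop) s : prod2 A B s ->
  span (fun y => exists a b, A a /\ B b /\ y = a * b) s.
Proof.
move=> [n [a [b [hi ->]]]]; apply: span_sum => i.
by have [ha hb] := hi i; exists (a i), (b i).
Qed.

Lemma prod2_single (A B : S -> Prop) a b : A a -> B b -> prod2 A B (a * b).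
Proof.
move=> ha hb; exists 1%N, (fun _ => a), (fun _ => b); split=> //.
by rewrite big_ord1.
Qed.

Lemma prod2_mulr (A B : S -> Prop) y r : (forall b, B b -> B (b * r)) ->
  prod2 A B y -> prod2 A B (y * r).
Proof.
move=> hB [n [a [b [hi ->]]]]; exists n, a, (fun i => b i * r); split.
  by move=> i; have [ha hb] := hi i; split=> //; apply: hB.
by rewrite mulr_suml; apply: eq_bigr => i _; rewrite mulrA.
Qed.

Lemma prod2_mull (A B : S -> Prop) y r : (forall a, A a -> A (r * a)) ->
  prod2 A B y -> prod2 A B (r * y).
Proof.
move=> hA [n [a [b [hi ->]]]]; exists n, (fun i => r * a i), b; split.
  by move=> i; have [ha hb] := hi i; split=> //; apply: hA.
by rewrite mulr_sumr; apply: eq_bigr => i _; rewrite mulrA.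
Qed.

Lemma prod3_span (A B C : S -> Prop) s : prod3 A B C s ->
  span (fun y => exists a b c, A a /\ B b /\ C c /\ y = a * b * c) s.
Proof.
move=> [n [a [b [c [hi ->]]]]]; apply: span_sum => i.
by have [ha [hb hc]] := hi i; exists (a i), (b i), (c i).
Qed.

Hypothesis eps : epsilon_strongly_graded Sg.

Lemma gr_add g : Sg g 0 /\ forall x y, Sg g x -> Sg g y -> Sg g (x - y).
Proof. by case: eps => [[h _] _]; apply: h. Qed.
Lemma gr_mul g h x y : Sg g x -> Sg h y -> Sg (gmul g h) (x * y).
Proof. by case: eps => [[_ [_ [_ h']]] _]; apply: h'. Qed.
Lemma gr_cov s : span (fun x => exists g, Sg g x) s.
Proof.
case: eps => [[_ [h _]] _]; have [n [g [x [hi ->]]]] := h s.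
by apply: span_sum => i; exists (g i).
Qed.
Lemma gr3 g s : Sg g s ->
  span (fun y => exists a b c, Sg g a /\ Sg (ginv g) b /\ Sg g c /\ y = a * b * c) s.
Proof. by case: eps => [_ [h _]] /h; apply: prod3_span. Qed.

Lemma EPS h : exists e,
  span (fun y => exists b c, Sg h b /\ Sg (ginv h) c /\ y = b * c) e /\
  (forall r, Sg (gone G) r -> e * r = r * e) /\ e * e = e /\
  (forall s, Sg h s -> e * s = s) /\ (forall s, Sg (ginv h) s -> s * e = s).
Proof.
case: eps => [_ [_ h2]]; have [e [he hu]] := h2 h.
exists e; split; first exact: prod2_span.
split.
  move=> r hr.
  have h1 : e * r * e = e * r.
    apply: (hu _ _).2; apply: prod2_mulr he => c hc.
    by have := gr_mul hc hr; rewrite mulg1'.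
  have h3 : e * (r * e) = r * e.
    apply: (hu _ _).1; apply: prod2_mull he => b hb.
    by have := gr_mul hr hb; rewrite gmul1.
  by rewrite -h1 -mulrA h3.
split; first exact: (hu _ he).1.
split.
  move=> s /gr3; apply: (@span_closed _ _ (fun s => e * s = s)).
  - by rewrite mulr0.
  - by move=> y z hy hz; rewrite mulrBr hy hz.
  - move=> y [a [b [c [ha [hb [hc ->]]]]]].
    by rewrite !mulrA -(mulrA e a b) (hu _ (prod2_single ha hb)).1.
move=> s /gr3; apply: (@span_closed _ _ (fun s => s * e = s)).
- by rewrite mul0r.
- by move=> y z hy hz; rewrite mulrBl hy hz.
- move=> y [a [b [c [ha [hb [hc ->]]]]]].
  rewrite ginvK in hb.
  by rewrite -!mulrA (mulrA b c e) (hu _ (prod2_single hb hc)).2.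
Qed.

Lemma right_part : polycyclic_by_finite G ->
  right_noetherian_on (Sg (gone G)) -> right_noetherian_on (fun _ : S => True).
Proof.
move=> hG hR; apply: (@core G S Sg) => //.
- by move=> g; case: (gr_add g).
- by move=> g; case: (gr_add g).
- exact: gr_cov.
- exact: gr_mul.
- exact: gr3.
- move=> g; have [e [he [hc [ee [_ hr]]]]] := EPS (ginv g).
  exists e; split; last by split=> //; split=> // s hs; apply: hr; rewrite ginvK.
  by rewrite ginvK in he.
Qed.

Lemma span_conv (P : S -> Prop) x : span P x -> span (S := S^c) P x.
Proof.
elim=> [|y hy|y z _ hy _ hz]; first exact: (@span0 (S^c) P).
- exact: (@spanG (S^c) P).
- exact: (@spanB (S^c) P).
Qed.

Lemma left_part : polycyclic_by_finite G ->
  left_noetherian_on (Sg (gone G)) -> left_noetherian_on (fun _ : S => True).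
Proof.
move=> hG hL.
pose Sg' (g : G) (x : S^c) := Sg (ginv g) x.
have hR : right_noetherian_on (S := S^c) (Sg' (gone G)).
  rewrite /Sg' ginv1; move=> I hI hm; apply: hL hm => k.
  exact: hI k.
have := @core G (S^c) Sg'.
move=> hc J hJ hm; apply: hc => //.
- by move=> g; case: (gr_add (ginv g)).
- by move=> g; case: (gr_add (ginv g)).
- move=> s; apply: span_conv; apply: span_mono (gr_cov s) => y [g hg].
  by exists (ginv g); rewrite /Sg' ginvK.
- move=> g h x y hx hy; rewrite /Sg' ginvM.
  exact: (gr_mul hy hx).
- move=> g s hs; apply: span_conv; apply: span_mono (gr3 hs) => y [a [b [c [ha [hb [hc ->]]]]]].
  by exists c, b, a; split=> //; split=> //; split=> //; change (a * b * c = a * (b * c) :> S); by rewrite mulrA.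
- move=> g; have [e [he [hc [ee [hl _]]]]] := EPS (ginv g).
  exists e; split.
    apply: span_conv; apply: span_mono he => y [b [c [hb [hc' ->]]]].
    by exists c, b.
  split. move=> r. rewrite /Sg' ginv1 => hr. exact: (esym (hc r hr)).
  by split=> // s hs; apply: hl.
Qed.
End Final.

Theorem theorem3p7 (G : group) (S : nzRingType) (Sg : G -> S -> Prop) :
  polycyclic_by_finite G ->
  epsilon_strongly_graded Sg ->
  (right_noetherian_on (Sg (gone G)) -> right_noetherian_on (fun _ : S => True)) /\
  (left_noetherian_on (Sg (gone G)) -> left_noetherian_on (fun _ : S => True)).
Proof.
move=> hG heps; split; [exact: (right_part heps hG) | exact: (left_part heps hG)].
Qed.
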